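(* Let $n\ge 3$. The metric dimension of the power graph $P(G(n))$ of the gyrogroup $G(n)$ (defined in the context) is $\psi(P(G(n)))=2^n-3$.
   Context: Let $n\ge 3$ be an integer and $m=2^{n-1}$. Let $P(n)=\{0,1,\dots,m-1\}$, $H(n)=\{m,m+1,\dots,2^n-1\}$ and $G(n)=P(n)\cup H(n)$. For $i,j\in G(n)$ let $t,s,k\in P(n)$ be the residues modulo $m$ (taken in $\{0,\dots,m-1\}$) of $i+j$, $i+(\frac m2-1)j$ and $(\frac m2+1)i+(\frac m2-1)j$, respectively, and define $i\oplus j=t$ if $i,j\in P(n)$; $i\oplus j=t+m$ if $i\in P(n),j\in H(n)$; $i\oplus j=s+m$ if $i\in H(n),j\in P(n)$; $i\oplus j=k$ if $i,j\in H(n)$. Then $(G(n),\oplus)$ is a gyrogroup with identity $e=0$. Powers are defined by $a^1=a$, $a^{k+1}=a^k\oplus a$. The power graph $P(G(n))$ is the simple undirected graph with vertex set $G(n)$ in which distinct vertices $u,v$ are adjacent if and only if $u^k=v$ or $v^k=u$ for some positive integer $k$. For a connected graph $G$ and an ordered set $U=\{u_1,\dots,u_s\}\subseteq V(G)$, the representation of $v$ is $r(v|U)=(d(v,u_1),\dots,d(v,u_s))$; $U$ is a resolving set if distinct vertices have distinct representations. The metric dimension $\psi(G)$ is the minimum cardinality of a resolving set. *)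

(* Defs.v *)
From mathcomp Require Import all_boot.
From mathcomp Require Import boolp.
Set Implicit Arguments. Unset Strict Implicit. Unset Printing Implicit Defensive.

Definition gm (n : nat) : nat := 2 ^ n.-1.

Definition gop (n : nat) (i j : nat) : nat :=
  let m := gm n in
  let t := (i + j) %% m in
  let s := (i + (m %/ 2 - 1) * j) %% m in
  let k := ((m %/ 2 + 1) * i + (m %/ 2 - 1) * j) %% m in
  if i < m then (if j < m then t else t + m)
  else (if j < m then s + m else k).

(* a^1 = a, a^(k+1) = a^k (+) a ; the value at k = 0 is never used *)
Fixpoint gpow (n : nat) (a : nat) (k : nat) : nat :=
  match k with
  | 0 => 0
  | 1 => a
  | k'.+1 => gop n (gpow n a k') a
  end.

Section Graph.
Variable T : finType.
Variable adj : T -> T -> Prop.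

Fixpoint walk (k : nat) (u v : T) : Prop :=
  match k with
  | 0 => u = v
  | k'.+1 => exists w, adj u w /\ walk k' w v
  end.

(* graph distance: length of a shortest walk (0 if unreachable; irrelevant
   for connected graphs) *)
Definition gdist (u v : T) : nat :=
  match pselect (exists k, `[< walk k u v >]) with
  | left H => ex_minn H
  | right _ => 0
  end.

Definition resolving (U : {set T}) : Prop :=
  forall v w : T, (forall u, u \in U -> gdist v u = gdist w u) -> v = w.

Definition is_metric_dimension (d : nat) : Prop :=
  (exists U : {set T}, resolving U /\ #|U| = d) /\
  (forall U : {set T}, resolving U -> d <= #|U|).
End Graph.

Definition power_adj (n : nat) (u v : 'I_(2 ^ n)) : Prop :=
  u <> v /\ exists k, 0 < k /\
    (gpow n (val u) k = val v \/ gpow n (val v) k = val u).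

(* Main.v *)
Require Import Defs.
From mathcomp Require Import all_boot.
From mathcomp Require Import boolp zify.

Lemma gm_fact n : 3 <= n -> exists h, gm n = h + h /\ 2 <= h /\ 2 ^ n = gm n + gm n.
Proof.
move=> hn; exists (2 ^ n.-2); rewrite /gm.
have e1 : n.-1 = n.-2.+1 by lia.
have e2 : n = n.-2.+2 by lia.
have h2 : 2 <= 2 ^ n.-2.
  have : 2 ^ 1 <= 2 ^ n.-2 by rewrite leq_exp2l //; lia.
  by [].
rewrite e1 expnS; split; [by rewrite mul2n addnn|split=>//].
rewrite {1}e2 !expnS. lia.
Qed.

Lemma gopPP n i j : i < gm n -> j < gm n -> gop n i j = (i + j) %% gm n.
Proof. by move=> hi hj; rewrite /gop hi hj. Qed.

Lemma gopHH n a : 3 <= n -> gm n <= a -> gop n a a = 0.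
Proof.
move=> hn ha; have [h [eh [h2 _]]] := gm_fact _ hn.
rewrite /gop ltnNge ha /=.
have -> : (gm n %/ 2 + 1) * a + (gm n %/ 2 - 1) * a = a * gm n.
  rewrite eh; have -> : (h + h) %/ 2 = h by rewrite addnn -mul2n mulKn.
  rewrite -mulnDl mulnC; congr (_ * _); lia.
by rewrite modnMl.
Qed.

Lemma gop0H n a : 3 <= n -> gm n <= a -> a < gm n + gm n -> gop n 0 a = a.
Proof.
move=> hn ha ha2; have [h [eh [h2 _]]] := gm_fact _ hn.
rewrite /gop (_ : 0 < gm n); last by lia.
rewrite ltnNge ha /=.
rewrite add0n -{1}(subnK ha) modnDr modn_small; lia.
Qed.

Lemma gpowP n a k : a < gm n -> 0 < k -> gpow n a k = (k * a) %% gm n.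
Proof.
move=> ha; have gp : 0 < gm n by rewrite /gm expn_gt0.
elim: k => [//|k IH] _.
case: k IH => [|k] IH; first by rewrite mul1n modn_small.
have -> : gpow n a k.+2 = gop n (gpow n a k.+1) a by [].
rewrite gopPP ?IH // ?ltn_pmod //.
by rewrite modnDml mulSn addnC.
Qed.

Lemma gpowP_lt n a k : 3 <= n -> a < gm n -> gpow n a k < gm n.
Proof.
move=> hn ha; have gp : 0 < gm n by rewrite /gm expn_gt0.
case: k => [|k] //.
by rewrite gpowP // ltn_pmod.
Qed.

Lemma gpowH n a k : 3 <= n -> gm n <= a -> a < gm n + gm n ->
  gpow n a k = 0 \/ gpow n a k = a.
Proof.
move=> hn ha ha2; elim: k => [|k IH]; first by left.
case: k IH => [|k] IH; first by right.
have -> : gpow n a k.+2 = gop n (gpow n a k.+1) a by [].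
case: IH => ->; [right; exact: gop0H | left; exact: gopHH].
Qed.

Lemma gpow2 n a : 3 <= n -> gm n <= a -> gpow n a 2 = 0.
Proof. by move=> hn ha; rewrite /= gopHH. Qed.

Lemma L1 m u v : 0 < u -> u < m -> gcdn u m %| v -> exists k, 0 < k /\ (k * u) %% m = v %% m.
Proof.
move=> hu hum hg.
have [km kn E _] := egcdnP m hu.
have ev := divnK hg.
set q := v %/ gcdn u m in ev.
set g := gcdn u m in E ev.
exists (km * q + m); split; first by lia.
have -> : (km * q + m) * u = (kn * q + u) * m + v.
  rewrite -ev. nia.
by rewrite modnMDl.
Qed.

Lemma NT N u v : u < 2 ^ N -> v < 2 ^ N -> u != v ->
  exists k, 0 < k /\ ((k * u) %% 2 ^ N = v \/ (k * v) %% 2 ^ N = u).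
Proof.
move=> hu hv huv.
have gp : 0 < 2 ^ N by rewrite expn_gt0.
case: (posnP u) => [u0|upos].
  exists (2 ^ N); split => //; right; by rewrite modnMr u0.
case: (posnP v) => [v0|vpos].
  exists (2 ^ N); split => //; left; by rewrite modnMr v0.
have /(dvdn_pfactor _ _ (isT : prime 2)) [e _ Ee] := dvdn_gcdr u (2 ^ N).
have /(dvdn_pfactor _ _ (isT : prime 2)) [f _ Ef] := dvdn_gcdr v (2 ^ N).
case: (leqP e f) => hef.
  have hg : gcdn u (2 ^ N) %| v.
    apply: (dvdn_trans _ (dvdn_gcdl v (2 ^ N))).
    by rewrite Ee Ef dvdn_exp2l.
  have [k [k0 Hk]] := L1 _ _ _ upos hu hg.
  by exists k; split => //; left; rewrite Hk modn_small.
have hg : gcdn v (2 ^ N) %| u.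
  apply: (dvdn_trans _ (dvdn_gcdl u (2 ^ N))).
  by rewrite Ee Ef dvdn_exp2l // ltnW.
have [k [k0 Hk]] := L1 _ _ _ vpos hv hg.
by exists k; split => //; right; rewrite Hk modn_small.
Qed.

Definition Adj n (x y : nat) : bool :=
  (x != y) && ((x < gm n) && (y < gm n) || (x == 0) && (gm n <= y) || (y == 0) && (gm n <= x)).

Lemma adjN n (u v : nat) : 3 <= n -> u < gm n + gm n -> v < gm n + gm n ->
  (u <> v /\ exists k, 0 < k /\ (gpow n u k = v \/ gpow n v k = u)) <-> Adj n u v.
Proof.
move=> hn hu hv; have [h [eh [h2 e2]]] := gm_fact _ hn.
have Fu k : (u < gm n -> gpow n u k < gm n) /\
   (gm n <= u -> gpow n u k = 0 \/ gpow n u k = u).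
  by split => H; [apply: gpowP_lt | apply: gpowH].
have Fv k : (v < gm n -> gpow n v k < gm n) /\
   (gm n <= v -> gpow n v k = 0 \/ gpow n v k = v).
  by split => H; [apply: gpowP_lt | apply: gpowH].
split.
  move=> [neq [k [k0 H]]].
  have := Fu k; have := Fv k; rewrite /Adj; lia.
rewrite /Adj => /andP [neq H]; split; first by move=> e; rewrite e eqxx in neq.
case: (ltnP u (gm n)) => hum; case: (ltnP v (gm n)) => hvm.
- have e1 : gm n = 2 ^ n.-1 by [].
  rewrite e1 in hum hvm.
  have [k [k0 Hk]] := NT (n.-1) u v hum hvm neq.
  exists k; split => //; rewrite !gpowP //; exact: Hk.
- exists 2; split => //; right; rewrite gpow2 //; lia.
- exists 2; split => //; left; rewrite gpow2 //; lia.
- lia.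
Qed.

Lemma adjE n (u v : 'I_(2 ^ n)) : 3 <= n -> @power_adj n u v <-> Adj n u v.
Proof.
move=> hn; have [h [eh [h2 e2]]] := gm_fact _ hn.
have hu : nat_of_ord u < gm n + gm n by rewrite -e2 ltn_ord.
have hv : nat_of_ord v < gm n + gm n by rewrite -e2 ltn_ord.
rewrite -(adjN _ _ _ hn hu hv) /power_adj.
split; move=> [neq H]; split => //; [move=> e; apply: neq; exact: val_inj | by move=> e; rewrite e in neq].
Qed.

Lemma gdist_eq (T : finType) (adj : T -> T -> Prop) u v d :
  walk adj d u v -> (forall k, k < d -> ~ walk adj k u v) -> gdist adj u v = d.
Proof.
move=> W Hmin; rewrite /gdist; case: pselect => [H|H]; last first.
  by exfalso; apply: H; exists d; apply/asboolP.
case: ex_minnP => k /asboolP Wk Hk.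
have Hkd : k <= d by apply: Hk; apply/asboolP.
case: (ltngtP k d) Hkd => // hk _; by exfalso; apply: (Hmin k hk).
Qed.

Definition D n (x y : nat) : nat := if x == y then 0 else if Adj n x y then 1 else 2.

Lemma gdistE n (u v : 'I_(2 ^ n)) : 3 <= n -> gdist (@power_adj n) u v = D n u v.
Proof.
move=> hn; have [h [eh [h2 e2]]] := gm_fact _ hn.
have hu : nat_of_ord u < gm n + gm n by rewrite -e2 ltn_ord.
have hv : nat_of_ord v < gm n + gm n by rewrite -e2 ltn_ord.
rewrite /D; case: eqP => [e|ne].
  have -> : u = v by apply: val_inj.
  by apply: gdist_eq => //.
have une : u <> v by move=> e; apply: ne; rewrite e.
case: ifP => hA.
  apply: gdist_eq; first by exists v; split => //; apply/(adjE _ _ _ hn).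
  by move=> [|k] // _ /= e.
have p0 : 0 < 2 ^ n by rewrite expn_gt0.
pose z := Ordinal p0.
apply: gdist_eq.
  exists z; split; first by apply/(adjE _ _ _ hn); rewrite /Adj /=; move: hA; rewrite /Adj; lia.
  exists v; split => //; apply/(adjE _ _ _ hn); rewrite /Adj /=; move: hA; rewrite /Adj; lia.
move=> [|[|k]] // _ /=.
move=> [w [Hw ew]]; subst w; move/(adjE _ _ _ hn): Hw; by rewrite hA.
Qed.

Lemma twinA n (x y u : nat) : 0 < x < gm n -> 0 < y < gm n -> u != x -> u != y -> D n x u = D n y u.
Proof.
move=> hx hy hux huy; rewrite /D.
have gp : 0 < gm n by rewrite /gm expn_gt0.
have -> : (x == u) = false by apply/eqP => e; rewrite e eqxx in hux.
have -> : (y == u) = false by apply/eqP => e; rewrite e eqxx in huy.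
have -> : Adj n x u = Adj n y u by apply/idP/idP; rewrite /Adj; lia.
by [].
Qed.

Lemma twinB n (x y u : nat) : gm n <= x -> gm n <= y -> u != x -> u != y -> D n x u = D n y u.
Proof.
move=> hx hy hux huy; rewrite /D.
have gp : 0 < gm n by rewrite /gm expn_gt0.
have -> : (x == u) = false by apply/eqP => e; rewrite e eqxx in hux.
have -> : (y == u) = false by apply/eqP => e; rewrite e eqxx in huy.
have -> : Adj n x u = Adj n y u by apply/idP/idP; rewrite /Adj; lia.
by [].
Qed.

Lemma twins_res n (U : {set 'I_(2 ^ n)}) (x y : 'I_(2 ^ n)) : 3 <= n ->
  resolving (@power_adj n) U -> x \notin U -> y \notin U ->
  (forall u : 'I_(2 ^ n), u != x -> u != y -> D n x u = D n y u) -> x = y.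
Proof.
move=> hn R xU yU T; apply: R => u uU.
rewrite !gdistE //; apply: T.
- by apply/eqP => e; subst; rewrite uU in xU.
- by apply/eqP => e; subst; rewrite uU in yU.
Qed.

Theorem mainTheorem6 (n : nat) (hn : 3 <= n) :
  is_metric_dimension (@power_adj n) (2 ^ n - 3).
Proof.
have [h [eh [h2 e2]]] := gm_fact _ hn.
have p0 : 0 < 2 ^ n by rewrite expn_gt0.
pose z := Ordinal p0.
split; last first.
  move=> U R.
  have [a Ha] : exists a : 'I_(2 ^ n), forall x, x \notin U -> 0 < x < gm n -> x = a.
    case: (pickP (fun x : 'I_(2 ^ n) => (x \notin U) && (0 < x < gm n))) => [a /andP [aU ar] | none].
      exists a => x xU xr; apply: (twins_res _ _ _ _ hn R) => // u ux ua.
      by apply: twinA.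
    by exists z => x xU xr; have := none x; rewrite xU xr.
  have [b Hb] : exists b : 'I_(2 ^ n), forall x, x \notin U -> gm n <= x -> x = b.
    case: (pickP (fun x : 'I_(2 ^ n) => (x \notin U) && (gm n <= x))) => [b /andP [bU br] | none].
      exists b => x xU xr; apply: (twins_res _ _ _ _ hn R) => // u ux ub.
      by apply: twinB.
    by exists z => x xU xr; have := none x; rewrite xU xr.
  have sub : ~: U \subset [:: z; a; b].
    apply/subsetP => x; rewrite inE => xU; rewrite !inE.
    case: (posnP x) => [x0|xpos].
      by have -> : x = z by apply: val_inj.
    case: (ltnP x (gm n)) => xm.
      by rewrite (Ha x xU) ?eqxx ?orbT // xpos xm.
    by rewrite (Hb x xU) ?eqxx ?orbT.
  have := subset_leq_card sub.
  have := card_size [:: z; a; b].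
  have := cardsC U; rewrite card_ord /=. move=> H1 H2 H3; have := leq_trans H3 H2; lia.
have p1 : 1 < 2 ^ n by lia.
have pm : gm n < 2 ^ n by lia.
have p2 : 2 < 2 ^ n by lia.
have pm1 : gm n + 1 < 2 ^ n by lia.
pose z1 := Ordinal p1; pose zm := Ordinal pm.
pose z2 := Ordinal p2; pose zm1 := Ordinal pm1.
pose s := [:: z; z1; zm].
exists (~: [set x in s]); split; last first.
  have := cardsC [set x in s]; rewrite card_ord cardsE.
  have : #|s| = 3.
    apply/card_uniqP; rewrite /= !inE -!val_eqE /=; lia.
  move=> E; rewrite E; lia.
move=> v w H.
have inU x : (x \in ~: [set x in s]) = (x \notin s) by rewrite !inE.
case vU : (v \in ~: [set x in s]).
  have := H v vU; rewrite !gdistE // /D eqxx; case: eqP => [e|] _; first by apply: val_inj.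
  by case: ifP.
case wU : (w \in ~: [set x in s]).
  have := H w wU; rewrite !gdistE // /D eqxx; case: eqP => [e|] _; first by apply: val_inj.
  by case: ifP.
have H2 := H z2; have H3 := H zm1.
rewrite !inU /= !inE -!val_eqE /= in H2 H3.
have {}H2 := H2 ltac:(lia); have {}H3 := H3 ltac:(lia).
move: H2 H3; rewrite !gdistE //.
move: vU wU; rewrite !inU => /negbFE vs /negbFE ws.
move: vs ws; rewrite /s !inE.
move=> /or3P [/eqP->|/eqP->|/eqP->] /or3P [/eqP->|/eqP->|/eqP->] //= ;
  rewrite /D /Adj; repeat (case: ifPn => ?); move=> *; apply: val_inj => /=; lia.
Qed.
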